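(* Let $\mathcal M=(\mathcal S,\mathcal A,P,r,\gamma)$, $\mathcal Z$, $\{\sigma_t\}_{t\ge1}$, $\hat f$, $\mathfrak F$ be as in the context, and suppose the features $Z_t=\sigma_t(H_t)$ form an $(\epsilon,\delta)$-approximate information state with respect to $\mathfrak F$, with AIS approximator $(\hat r,\hat P)$. Let $\hat V$ be the solution of the AIS dynamic program, $\mu$ a policy greedy with respect to $\hat Q$, and $\pi=(\pi_t)_{t\ge1}$, $\pi_t=\mu\circ\sigma_t$, the induced history-based policy. Then $$\Delta:=\sup_{t\ge1}\ \sup_{h_t\in\mathcal H_t}\big|V^\star(s_t)-V^{\pi}_t(h_t)\big|\ \le\ \frac{2\big(\epsilon+\gamma\,\delta\,\kappa_{\mathfrak F}(\hat V,\hat f)\big)}{1-\gamma},$$ where $\kappa_{\mathfrak F}(\hat V,\hat f)=\sup_{z\in\mathcal Z,\,a\in\mathcal A}\rho_{\mathfrak F}\big(s\mapsto \hat V(\hat f(z,s,a))\big)$ and $s_t$ denotes the last state of $h_t$.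
   Context: MDP: $\mathcal M=(\mathcal S,\mathcal A,P,r,\gamma)$ with finite state space $\mathcal S$, finite action space $\mathcal A$, transition kernel $P(s'\mid s,a)$, bounded reward $r:\mathcal S\times\mathcal A\to\mathbb R$, discount $\gamma\in(0,1)$. $V^\star(s)$ is the optimal value: the supremum over all (randomised, possibly history-dependent) policies of $\mathbb E[\sum_{k\ge1}\gamma^{k-1}r(S_k,A_k)\mid S_1=s]$. A history at time $t$ is $h_t=(s_{1:t},a_{1:t-1})\in\mathcal H_t=\mathcal S^t\times\mathcal A^{t-1}$. Feature abstraction: $\mathcal Z$ is a set; maps $\sigma_t:\mathcal H_t\to\mathcal Z$ are recursively updatable, i.e. there is $\hat f:\mathcal Z\times\mathcal S\times\mathcal A\to\mathcal Z$ with $\sigma_{t+1}(s_{1:t+1},a_{1:t})=\hat f(\sigma_t(s_{1:t},a_{1:t-1}),s_{t+1},a_t)$ for all $t\ge1$. IPM: $\mathfrak F$ is a class of real functions on $\mathcal S$; for $\nu_1,\nu_2\in\Delta(\mathcal S)$, $d_{\mathfrak F}(\nu_1,\nu_2)=\sup_{g\in\mathfrak F}|\sum_s g(s)\nu_1(s)-\sum_s g(s)\nu_2(s)|$; the Minkowski functional is $\rho_{\mathfrak F}(g)=\inf\{\rho\ge0:\rho^{-1}g\in\mathfrak F\}$ (with $\inf\emptyset=+\infty$). AIS: the features are an $(\epsilon,\delta)$-AIS w.r.t. $\mathfrak F$ if there exist a bounded $\hat r:\mathcal Z\times\mathcal A\to\mathbb R$ and $\hat P:\mathcal Z\times\mathcal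 A\to\Delta(\mathcal S)$ (the AIS approximator) such that for all $t$, all $h_t\in\mathcal H_t$ and all $a\in\mathcal A$: $|r(s_t,a)-\hat r(\sigma_t(h_t),a)|\le\epsilon$ and $d_{\mathfrak F}(P(\cdot\mid s_t,a),\hat P(\cdot\mid\sigma_t(h_t),a))\le\delta$. AIS dynamic program: $\hat V:\mathcal Z\to\mathbb R$ is the unique bounded function satisfying $\hat V(z)=\max_{a}\hat Q(z,a)$, where $\hat Q(z,a)=\hat r(z,a)+\gamma\sum_{s'\in\mathcal S}\hat P(s'\mid z,a)\hat V(\hat f(z,s',a))$. A policy $\mu:\mathcal Z\to\Delta(\mathcal A)$ is greedy if $\mathrm{supp}\,\mu(z)\subseteq\arg\max_a\hat Q(z,a)$ for all $z$. Value of the history-based policy: $V^{\pi}_t(h_t)=\mathbb E[\sum_{k\ge t}\gamma^{k-t}r(S_k,A_k)]$ where the process starts at time $t$ from state $s_t$ with feature $Z_t=\sigma_t(h_t)$, actions are drawn as $A_k\sim\mu(Z_k)$, $S_{k+1}\sim P(\cdot\mid S_k,A_k)$, and $Z_{k+1}=\hat f(Z_k,S_{k+1},A_k)$. *)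

(* Defs.v *)
From HB Require Import structures.
From mathcomp Require Import all_boot all_order all_algebra.
From mathcomp Require Import all_classical all_reals all_analysis.
Set Implicit Arguments. Unset Strict Implicit. Unset Printing Implicit Defensive.
Import Order.TTheory GRing.Theory Num.Theory numFieldNormedType.Exports.
Local Open Scope ring_scope.
Local Open Scope classical_set_scope.

Section AIS.
Variables (R : realType) (S A : finType).

Definition is_distr (T : finType) (p : T -> R) : Prop :=
  (forall x, 0 <= p x) /\ \sum_(x : T) p x = 1.

(* A history h_t = (s_{1:t}, a_{1:t-1}) is encoded as (past, s_t) with
   past = [:: (s_1,a_1); ...; (s_{t-1},a_{t-1})]  (so t = size past + 1). *)

Definition history_policy := seq (S * A) -> S -> A -> R.
Definition is_policy (pol : history_policy) : Prop :=
  forall past s, is_distr (pol past s).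

Variables (P : S -> A -> S -> R) (r : S -> A -> R) (gamma : R).

Fixpoint ret_n (pol : history_policy) (n : nat) (past : seq (S * A)) (s : S) : R :=
  match n with
  | 0 => 0
  | n'.+1 => \sum_(a : A) pol past s a *
      (r s a + gamma * \sum_(s' : S) P s a s' * ret_n pol n' (rcons past (s, a)) s')
  end.

Definition policy_value (pol : history_policy) (s : S) : R :=
  limn (fun n => ret_n pol n [::] s).

Definition Vstar (s : S) : R :=
  sup [set policy_value pol s | pol in [set pol | is_policy pol]].

Definition dF (F : set (S -> R)) (nu1 nu2 : S -> R) : \bar R :=
  ereal_sup [set (`| \sum_(s : S) g s * nu1 s - \sum_(s : S) g s * nu2 s |)%:E
            | g in F].

(* Minkowski functional rho_F(g) = inf { rho > 0 : rho^{-1} g \in F } (inf empty = +oo) *)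
Definition rhoF (F : set (S -> R)) (g : S -> R) : \bar R :=
  ereal_inf [set rho%:E | rho in [set rho : R | 0 < rho /\ F (fun s => rho^-1 * g s)]].

Variable (Z : Type).

Definition kappaF (F : set (S -> R)) (Vhat : Z -> R) (fhat : Z -> S -> A -> Z) : \bar R :=
  ereal_sup [set rhoF F (fun s => Vhat (fhat za.1 s za.2)) | za in [set: Z * A]].

Definition recursively_updatable (sigma : seq (S * A) -> S -> Z)
    (fhat : Z -> S -> A -> Z) : Prop :=
  forall past s a s', sigma (rcons past (s, a)) s' = fhat (sigma past s) s' a.

Definition is_AIS (F : set (S -> R)) (sigma : seq (S * A) -> S -> Z)
    (eps delta : R) (rhat : Z -> A -> R) (Phat : Z -> A -> S -> R) : Prop :=
  (exists M : R, forall z a, `|rhat z a| <= M) /\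
  (forall z a, is_distr (Phat z a)) /\
  (forall past s a,
     `| r s a - rhat (sigma past s) a | <= eps /\
     (dF F (P s a) (Phat (sigma past s) a) <= delta%:E)%E).

Definition AIS_Q (rhat : Z -> A -> R) (Phat : Z -> A -> S -> R)
    (fhat : Z -> S -> A -> Z) (Vhat : Z -> R) (z : Z) (a : A) : R :=
  rhat z a + gamma * \sum_(s' : S) Phat z a s' * Vhat (fhat z s' a).

Definition solves_AIS_DP (rhat : Z -> A -> R) (Phat : Z -> A -> S -> R)
    (fhat : Z -> S -> A -> Z) (Vhat : Z -> R) : Prop :=
  (exists M : R, forall z, `|Vhat z| <= M) /\
  (forall z, (forall a, AIS_Q rhat Phat fhat Vhat z a <= Vhat z) /\
             (exists a, AIS_Q rhat Phat fhat Vhat z a = Vhat z)).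

Definition greedy (rhat : Z -> A -> R) (Phat : Z -> A -> S -> R)
    (fhat : Z -> S -> A -> Z) (Vhat : Z -> R) (mu : Z -> A -> R) : Prop :=
  (forall z, is_distr (mu z)) /\
  (forall z a, mu z a != 0 ->
     forall b, AIS_Q rhat Phat fhat Vhat z b <= AIS_Q rhat Phat fhat Vhat z a).

(* n-step expected discounted return of the feature-based process
   (S_k, Z_k), A_k ~ mu(Z_k), S_{k+1} ~ P(.|S_k,A_k), Z_{k+1} = fhat Z_k S_{k+1} A_k *)
Fixpoint feat_ret_n (fhat : Z -> S -> A -> Z) (mu : Z -> A -> R)
    (n : nat) (z : Z) (s : S) : R :=
  match n with
  | 0 => 0
  | n'.+1 => \sum_(a : A) mu z a *
      (r s a + gamma * \sum_(s' : S) P s a s' * feat_ret_n fhat mu n' (fhat z s' a) s')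
  end.

Definition Vpi (sigma : seq (S * A) -> S -> Z) (fhat : Z -> S -> A -> Z)
    (mu : Z -> A -> R) (past : seq (S * A)) (s : S) : R :=
  limn (fun n => feat_ret_n fhat mu n (sigma past s) s).

End AIS.

(* Main.v *)
Require Import Defs.
From HB Require Import structures.
From mathcomp Require Import all_boot all_order all_algebra.
From mathcomp Require Import all_classical all_reals all_analysis.
From mathcomp Require Import ring lra.
Import Order.TTheory GRing.Theory Num.Theory numFieldNormedType.Exports.
Local Open Scope ring_scope.
Local Open Scope classical_set_scope.

Lemma distr_le (R : realType) (T : finType) (p f : T -> R) (B : R) :
  is_distr p -> (forall x, f x <= B) -> \sum_x p x * f x <= B.
Proof.
move=> [p0 p1] fB; apply: (le_trans (y := \sum_x p x * B)).
  by apply: ler_sum => x _; exact: ler_wpM2l.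
by rewrite -mulr_suml p1 mul1r.
Qed.

Lemma distr_ge (R : realType) (T : finType) (p f : T -> R) (B : R) :
  is_distr p -> (forall x, B <= f x) -> B <= \sum_x p x * f x.
Proof.
move=> [p0 p1] fB; apply: (le_trans (y := \sum_x p x * B)).
  by rewrite -mulr_suml p1 mul1r.
by apply: ler_sum => x _; exact: ler_wpM2l.
Qed.

Lemma distr_abs (R : realType) (T : finType) (p f : T -> R) (B : R) :
  is_distr p -> (forall x, `|f x| <= B) -> `|\sum_x p x * f x| <= B.
Proof.
move=> hp fB; rewrite ler_norml; apply/andP; split.
  by apply: distr_ge => // x; have := fB x; rewrite ler_norml => /andP[].
by apply: distr_le => // x; have := fB x; rewrite ler_norml => /andP[].
Qed.

Lemma distr_lin (R : realType) (T : finType) (p f : T -> R) (c : R) :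
  is_distr p -> \sum_x p x * (f x + c) = \sum_x p x * f x + c.
Proof.
move=> [p0 p1]; under eq_bigr do rewrite mulrDr.
by rewrite big_split /= -mulr_suml p1 mul1r.
Qed.

Lemma geom_cvg (R : realType) (u : R^nat) (C g : R) :
  0 <= g < 1 -> (forall k, `|u k.+1 - u k| <= C * g ^+ k) -> cvgn u.
Proof.
move=> /andP[g0 g1] hu.
have C0 : 0 <= C by have := hu 0%N; rewrite expr0 mulr1; apply: le_trans.
pose d := fun k => u k.+1 - u k.
have hs : cvgn (series d).
  apply: normed_cvg; apply: (series_le_cvg (v_ := geometric C g)).
  - by move=> n; rewrite /= normr_ge0.
  - by move=> n; rewrite /geometric /=; apply: mulr_ge0 => //; exact: exprn_ge0.
  - by move=> n; exact: hu.
  - by apply: is_cvg_geometric_series; rewrite ger0_norm.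
have -> : u = fun n => series d n + u 0%N.
  by apply: funext => n; rewrite /series /= telescope_sumr // subrK.
exact: is_cvgD hs (is_cvg_cst _).
Qed.

Lemma ret_nS (R : realType) (S A : finType) (P : S -> A -> S -> R) (r : S -> A -> R)
  (gamma : R) (pol : seq (S * A) -> S -> A -> R) n past s :
  ret_n P r gamma pol n.+1 past s = \sum_(a : A) pol past s a *
      (r s a + gamma * \sum_(s' : S) P s a s' * ret_n P r gamma pol n (rcons past (s, a)) s').
Proof. by []. Qed.

Lemma feat_S (R : realType) (S A : finType) (Z : Type) (P : S -> A -> S -> R) (r : S -> A -> R)
  (gamma : R) (fhat : Z -> S -> A -> Z) (mu : Z -> A -> R) n z s :
  feat_ret_n P r gamma fhat mu n.+1 z s = \sum_(a : A) mu z a *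
      (r s a + gamma * \sum_(s' : S) P s a s' * feat_ret_n P r gamma fhat mu n (fhat z s' a) s').
Proof. by []. Qed.

Theorem theorem1 (R : realType) (S A : finType) (Z : Type)
    (P : S -> A -> S -> R) (r : S -> A -> R) (gamma : R)
    (F : set (S -> R)) (sigma : seq (S * A) -> S -> Z) (fhat : Z -> S -> A -> Z)
    (eps delta : R) (rhat : Z -> A -> R) (Phat : Z -> A -> S -> R)
    (Vhat : Z -> R) (mu : Z -> A -> R) :
  0 < gamma < 1 ->
  (forall s a, is_distr (P s a)) ->
  recursively_updatable sigma fhat ->
  is_AIS P r F sigma eps delta rhat Phat ->
  solves_AIS_DP gamma rhat Phat fhat Vhat ->
  greedy gamma rhat Phat fhat Vhat mu ->
  (kappaF F Vhat fhat < +oo)%E ->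
  forall (past : seq (S * A)) (s : S),
    `| Vstar P r gamma s - Vpi P r gamma sigma fhat mu past s |
      <= 2 * (eps + gamma * delta * fine (kappaF F Vhat fhat)) / (1 - gamma).
Proof.
move=> /andP[g0' g1] HP Hupd [[Mr Hrhat] [HPhat Hais]] [[M HM] Hdp] [Hmu Hgr] Hkap past0 s0.
have g0 := ltW g0'.
have KL : forall past s a,
  `| \sum_s' P s a s' * Vhat (fhat (sigma past s) s' a)
     - \sum_s' Phat (sigma past s) a s' * Vhat (fhat (sigma past s) s' a)|
  <= delta * fine (kappaF F Vhat fhat).
  move=> past s a.
  pose z := sigma past s.
  pose g := fun s' => Vhat (fhat z s' a).
  pose D := `| \sum_s' P s a s' * g s' - \sum_s' Phat z a s' * g s'|.
  rewrite -/z -/D.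
  have hrho : (rhoF F g <= kappaF F Vhat fhat)%E.
    by apply: ereal_sup_ubound; exists (z, a).
  have [rho0 [rho0p Frho0]] : exists rho, 0 < rho /\ F (fun s => rho^-1 * g s).
    apply: contrapT => hne.
    have h0 : [set rho%:E | rho in [set rho : R | 0 < rho /\ F (fun s => rho^-1 * g s)]] = set0.
      apply/seteqP; split=> // x [rho hr _]; apply: hne; by exists rho.
    move: hrho; rewrite /rhoF h0 ereal_inf0 leye_eq => /eqP hk.
    by move: Hkap; rewrite hk ltxx.
  have hb : forall rho, 0 < rho -> F (fun s => rho^-1 * g s) -> D <= rho * delta.
    move=> rho rp Fr.
    have h2 := (Hais past s a).2.
    have h1 : ((`|\sum_s' (rho^-1 * g s') * P s a s' - \sum_s' (rho^-1 * g s') * Phat z a s'|)%:E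
              <= dF F (P s a) (Phat z a))%E.
      by apply: ereal_sup_ubound; exists (fun s' => rho^-1 * g s').
    have := le_trans h1 h2; rewrite lee_fin.
    have e1 : forall nu : S -> R, \sum_s' (rho^-1 * g s') * nu s' = rho^-1 * \sum_s' nu s' * g s'.
      by move=> nu; rewrite mulr_sumr; apply: eq_bigr => i _; rewrite mulrCA mulrC.
    rewrite !e1 -mulrBr normrM gtr0_norm ?invr_gt0 // -/D => h.
    by have := ler_wpM2l (ltW rp) h; rewrite mulrA mulfV ?gt_eqF // mul1r.
  have d0 : 0 <= delta.
    by have := le_trans (normr_ge0 _) (hb _ rho0p Frho0); rewrite pmulr_rge0.
  rewrite le_eqVlt in d0; case/orP: d0 => [/eqP d0|dp].
    by rewrite -d0 mul0r; have := hb _ rho0p Frho0; rewrite -d0 mulr0.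
  have h1 : ((D / delta)%:E <= rhoF F g)%E.
    apply/ereal_infP => _ [rho [rp Fr] <-]; rewrite lee_fin ler_pdivrMr //.
    exact: hb.
  have h2 := le_trans h1 hrho.
  move: h2 Hkap; case: (kappaF F Vhat fhat) => [k| |] //= h2 _.
  by rewrite lee_fin ler_pdivrMr // mulrC in h2.
set kap := fine (kappaF F Vhat fhat) in KL *.
pose a1 := (eps + gamma * delta * kap) / (1 - gamma).
have hg1 : 1 - gamma != 0 by rewrite subr_eq0 eq_sym (lt_eqF g1).
have ha1 : eps + gamma * (delta * kap) + gamma * a1 = a1.
  by rewrite /a1; field.
have ha1' : a1 = (eps + gamma * delta * kap) / (1 - gamma) by [].
clearbody a1 kap.
pose Rm := \sum_(x : S * A) `|r x.1 x.2|.
have hRm : forall s a, `|r s a| <= Rm.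
  move=> s a; rewrite /Rm (bigD1 (s, a)) //= lerDl.
  by apply: sumr_ge0 => *; exact: normr_ge0.
have retinc : forall pol : seq (S * A) -> S -> A -> R, is_policy pol ->
    forall k past s, `|ret_n P r gamma pol k.+1 past s - ret_n P r gamma pol k past s|
      <= Rm * gamma ^+ k.
  move=> pol hpol; elim=> [|k IH] past s.
    rewrite ret_nS /= subr0 expr0 mulr1; apply: distr_abs => // a.
    by rewrite big1 ?mulr0 ?addr0 // => i _; rewrite mulr0.
  rewrite ret_nS (ret_nS _ _ _ _ _ _ _ k) -sumrB.
  under eq_bigr do rewrite -mulrBr.
  apply: distr_abs => // a.
  have e : forall x y w : R, x + y - (x + w) = y - w by move=> x y w; ring.
  rewrite e -mulrBr -sumrB.
  under eq_bigr do rewrite -mulrBr.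
  rewrite normrM (ger0_norm g0) exprS mulrCA; apply: ler_wpM2l => //.
  by apply: distr_abs => // s'; exact: IH.
have retcvg : forall pol : seq (S * A) -> S -> A -> R, is_policy pol ->
    forall past s, cvgn (fun n => ret_n P r gamma pol n past s).
  move=> pol hp past s; apply: (geom_cvg _ _ Rm gamma).
    by rewrite g0 g1.
  by move=> k; exact: retinc.
have UB : forall pol : seq (S * A) -> S -> A -> R, is_policy pol ->
    forall n past' past s, ret_n P r gamma pol n past' s
       <= Vhat (sigma past s) + a1 + gamma ^+ n * (M - a1).
  move=> pol hpol; elim=> [|n IH] past' past s.
    by rewrite /= expr0 mul1r; have := HM (sigma past s); rewrite ler_norml => /andP[h _]; lra.
  rewrite ret_nS; apply: distr_le => // a.
  have h1 : \sum_s' P s a s' * ret_n P r gamma pol n (rcons past' (s, a)) s'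
     <= \sum_s' P s a s' * (Vhat (fhat (sigma past s) s' a) + (a1 + gamma ^+ n * (M - a1))).
    apply: ler_sum => s' _; apply: ler_wpM2l; first by case: (HP s a) => h _; exact: h.
    by rewrite -Hupd addrA; exact: IH.
  rewrite distr_lin // in h1.
  have := KL past s a; rewrite ler_norml => /andP[_ h2].
  have h3 := (Hais past s a).1; rewrite ler_norml in h3; case/andP: h3 => _ h3.
  have h4 := (Hdp (sigma past s)).1 a; rewrite /AIS_Q in h4.
  have A1 := ler_wpM2l g0 h1.
  have B1 := ler_wpM2l g0 h2.
  rewrite exprS.
  lra.
have LB : forall n past s,
    Vhat (sigma past s) - a1 - gamma ^+ n * (M - a1)
      <= feat_ret_n P r gamma fhat mu n (sigma past s) s.
  elim=> [|n IH] past s.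
    by rewrite /= expr0 mul1r; have := HM (sigma past s); rewrite ler_norml => /andP[_ h]; lra.
  rewrite feat_S.
  pose B := Vhat (sigma past s) - a1 - gamma ^+ n.+1 * (M - a1).
  apply: (le_trans (y := \sum_a mu (sigma past s) a * B)).
    by rewrite -mulr_suml (Hmu _).2 mul1r.
  apply: ler_sum => a _.
  have [->|ne] := eqVneq (mu (sigma past s) a) 0; first by rewrite !mul0r.
  apply: ler_wpM2l; first exact: (Hmu _).1.
  have h1 : \sum_s' P s a s' * (Vhat (fhat (sigma past s) s' a) + (- a1 - gamma ^+ n * (M - a1)))
     <= \sum_s' P s a s' * feat_ret_n P r gamma fhat mu n (fhat (sigma past s) s' a) s'.
    apply: ler_sum => s' _; apply: ler_wpM2l; first by case: (HP s a) => h _; exact: h.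
    by rewrite -Hupd addrA; exact: IH.
  rewrite distr_lin // in h1.
  have := KL past s a; rewrite ler_norml => /andP[h2 _].
  have h3 := (Hais past s a).1; rewrite ler_norml in h3; case/andP: h3 => h3 _.
  have [b hb] := (Hdp (sigma past s)).2.
  have h4 := Hgr _ _ ne b; rewrite hb /AIS_Q in h4.
  have A1 := ler_wpM2l g0 h1.
  have B1 := ler_wpM2l g0 h2.
  rewrite /B exprS.
  lra.
pose pol' := fun past' s' => mu (sigma (past0 ++ past') s').
have hpol' : is_policy pol' by move=> past' s'; exact: Hmu.
have hlink : forall n past' s', ret_n P r gamma pol' n past' s'
    = feat_ret_n P r gamma fhat mu n (sigma (past0 ++ past') s') s'.
  elim=> [|n IH] past' s' //.
  rewrite ret_nS feat_S; apply: eq_bigr => a _.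
  congr (_ * (_ + _ * _)); apply: eq_bigr => s'' _.
  by rewrite IH -rcons_cat Hupd.
have hVpi : Vpi P r gamma sigma fhat mu past0 s0 = policy_value P r gamma pol' s0.
  rewrite /Vpi /policy_value; congr (limn _); apply: funext => n.
  by rewrite hlink cats0.
have hK : (fun n => gamma ^+ n * (M - a1)) @ \oo --> 0.
  rewrite -(mul0r (M - a1)); apply: cvgMl; apply: cvg_expr.
  by rewrite ger0_norm.
have UBlim : forall pol : seq (S * A) -> S -> A -> R, is_policy pol ->
    policy_value P r gamma pol s0 <= Vhat (sigma past0 s0) + a1.
  move=> pol hp; rewrite /policy_value.
  have hu := retcvg pol hp [::] s0.
  have hw : (fun n => ret_n P r gamma pol n [::] s0 - gamma ^+ n * (M - a1)) @ \oo
      --> limn (fun n => ret_n P r gamma pol n [::] s0) - 0.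
    exact: cvgB hu hK.
  rewrite subr0 in hw.
  rewrite -(cvg_lim _ hw) //.
  apply: limr_le; first exact: cvgP hw.
  apply: nearW => n.
  by have := UB pol hp n [::] past0 s0; lra.
have LBlim : Vhat (sigma past0 s0) - a1 <= Vpi P r gamma sigma fhat mu past0 s0.
  rewrite hVpi /policy_value.
  have hu := retcvg pol' hpol' [::] s0.
  have hw : (fun n => ret_n P r gamma pol' n [::] s0 + gamma ^+ n * (M - a1)) @ \oo
      --> limn (fun n => ret_n P r gamma pol' n [::] s0) + 0.
    exact: cvgD hu hK.
  rewrite addr0 in hw.
  rewrite -(cvg_lim _ hw) //.
  apply: limr_ge; first exact: cvgP hw.
  apply: nearW => n.
  by rewrite hlink cats0; have := LB n past0 s0; lra.
have ne : [set policy_value P r gamma pol s0 | pol in [set pol | is_policy pol]] !=set0.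
  by exists (policy_value P r gamma pol' s0), pol'.
have VsUB : Vstar P r gamma s0 <= Vhat (sigma past0 s0) + a1.
  apply: ge_sup => // x [pol hp <-]; exact: UBlim.
have VsLB : Vpi P r gamma sigma fhat mu past0 s0 <= Vstar P r gamma s0.
  rewrite hVpi; apply: sup_upper_bound.
    split => //; exists (Vhat (sigma past0 s0) + a1) => x [pol hp <-]; exact: UBlim.
  by exists pol'.
rewrite -mulrA -ha1' ler_norml; apply/andP; split; lra.
Qed.
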